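(* Let $E$ be a finite directed graph satisfying Condition (EXC) and having no sources and no sinks. Then $\mathrm{h}_{\mathrm{alg}}(KE)=0$.
   Context: For a finite directed graph $E=(E^0,E^1,s,r)$: a sink is a vertex $v$ with $s^{-1}(v)=\emptyset$, a source a vertex with $r^{-1}(v)=\emptyset$. A cycle is a path $e_1\cdots e_n$ ($n\ge1$) with $s(e_1)=r(e_n)$ and $s(e_i)\neq s(e_j)$ for $i\neq j$. $E$ satisfies Condition (EXC) if every cycle is exclusive, i.e.\ no vertex of a cycle $C$ lies on a cycle other than a rotation of $C$. The path algebra $KE$ has basis all paths with concatenation product; standard filtration $V_n=$ span of paths of length $\le n$; $\mathrm{h}_{\mathrm{alg}}(KE)=0$ if $KE$ is finite-dimensional and $\limsup_n\frac1n\log\dim(V_n/V_{n-1})$ otherwise. *)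

(* Defs.v *)
From mathcomp Require Import all_boot all_order all_algebra.
From mathcomp Require Import all_classical all_reals all_analysis.
Set Implicit Arguments. Unset Strict Implicit. Unset Printing Implicit Defensive.
Import Order.TTheory GRing.Theory Num.Theory.

(* A finite directed graph E = (E^0, E^1, s, r) is given by finite types
   V (= E^0) and Ed (= E^1) and maps s r : Ed -> V.
   A path e_1 ... e_n has r(e_i) = s(e_{i+1}). *)
Section Graph.
Variables (V Ed : finType) (s r : Ed -> V).

Fixpoint epath (p : seq Ed) : bool :=
  match p with
  | e :: ((f :: _) as q) => (r e == s f) && epath q
  | _ => true
  end.

Definition is_sink (v : V) : Prop := forall e : Ed, s e <> v.
Definition is_source (v : V) : Prop := forall e : Ed, r e <> v.

Definition is_cycle (c : seq Ed) : bool :=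
  match c with
  | [::] => false
  | e :: _ => [&& epath c, s e == r (last e c) & uniq (map s c)]
  end.

Definition cycle_vertices (c : seq Ed) : seq V := map s c.

Definition condition_EXC : Prop :=
  forall c d : seq Ed, is_cycle c -> is_cycle d ->
    (exists v, v \in cycle_vertices c /\ v \in cycle_vertices d) ->
    exists k, d = rot k c.

(* number of paths of length n (paths of length 0 are the vertices).
   Since the paths form a basis of KE and V_n = span of paths of length <= n,
   this is dim (V_n / V_{n-1}) (with V_{-1} = 0). *)
Definition num_paths (n : nat) : nat :=
  if n is 0 then #|V| else #|[set t : n.-tuple Ed | epath t]|.

(* KE finite dimensional <-> only finitely many paths *)
Definition KE_finite_dim : Prop :=
  exists N, forall n, (N <= n)%N -> num_paths n = 0%N.

Local Open Scope ring_scope.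
Local Open Scope ereal_scope.

Definition h_alg (R : realType) : \bar R :=
  if pselect KE_finite_dim then 0
  else limn_esup (fun n : nat => ((ln (num_paths n)%:R) / n%:R)%:E).

End Graph.

(* Main.v *)
Require Import Defs.
From mathcomp Require Import all_boot all_order all_algebra.
From mathcomp Require Import all_classical all_reals all_analysis.
From mathcomp Require Import zify ring lra.
Set Implicit Arguments. Unset Strict Implicit. Unset Printing Implicit Defensive.
Import Order.TTheory GRing.Theory Num.Theory.

Section Comb.
Variables (V Ed : finType) (s r : Ed -> V).

Definition erel := fun a b => r a == s b.

Lemma epathE a w : epath s r (a :: w) = path erel a w.
Proof. elim: w a => [|b w IH] a //. rewrite [RHS]/= -IH. by []. Qed.

Lemma split_nonuniq (p : seq Ed) : ~~ uniq (map s p) ->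
  exists p1 x p2 y p3, p = p1 ++ x :: p2 ++ y :: p3 /\ s x = s y.
Proof.
elim: p => [|a q IH] //=; rewrite negb_and negbK.
case/orP.
  case/mapP => y yq say.
  case/splitPr: yq => p2 p3.
  by exists [::], a, p2, y, p3.
move/IH => [p1 [x [p2 [y [p3 [-> sxy]]]]]].
by exists (a :: p1), x, p2, y, p3.
Qed.

Lemma is_cycleE a c : is_cycle s r (a :: c) =
  [&& epath s r (a :: c), s a == r (last a c) & uniq (map s (a :: c))].
Proof. by []. Qed.

Lemma closed_to_cycle n a w : size w < n -> path erel a w -> r (last a w) = s a ->
  exists c, is_cycle s r (a :: c).
Proof.
elim: n a w => [|n IH] a w // hn hp hl.
have [u|nu] := boolP (uniq (map s (a :: w))).
  by exists w; rewrite is_cycleE epathE hp hl eqxx u.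
have [p1 [x [p2 [y [p3 [E sxy]]]]]] := split_nonuniq nu.
case: p1 E => [|b q] [ax Ew].
  subst w x; move: hp; rewrite cat_path => /andP[hp1 /= /andP[hy _]].
  apply: (IH a p2) => //.
    move: hn; rewrite size_cat /=. lia.
  by apply/eqP; rewrite sxy.
subst w b; move: hp; rewrite cat_path /= cat_path /= => /andP[hq /andP[hx /andP[_ /andP[hy hp3]]]].
apply: (IH a (q ++ y :: p3)).
- move: hn; rewrite !size_cat /= !size_cat /=. lia.
- rewrite cat_path /= hq hp3 /erel andbT (eqP hx) sxy eqxx.
- by [].
- by move: hl; rewrite !last_cat /= last_cat /=.
Qed.


Lemma cycle_head_unique a b c1 c2 : condition_EXC s r ->
  is_cycle s r (a :: c1) -> is_cycle s r (b :: c2) -> s a = s b -> a = b.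
Proof.
move=> exc ca cb sab.
have [k Ek] : exists k, b :: c2 = rot k (a :: c1).
  apply: exc ca cb _; exists (s a); split; rewrite /cycle_vertices /= inE ?sab eqxx //.
have up : uniq (map s (a :: c1)) by move: ca; rewrite is_cycleE => /and3P[].
case: (ltnP k (size (a :: c1))) => hk; last by move: Ek; rewrite rot_oversize // => -[].
move: Ek; rewrite /rot (drop_nth a hk) => -[hb _].
have : nth (s a) (map s (a :: c1)) k == nth (s a) (map s (a :: c1)) 0.
  by rewrite (nth_map a) // -hb -sab.
rewrite nth_uniq ?size_map // => /eqP k0.
by rewrite hb k0.
Qed.


Lemma epath_nth x0 t k : epath s r t -> k.+1 < size t ->
  r (nth x0 t k) = s (nth x0 t k.+1).
Proof.
case: t => [|a w] //; rewrite epathE => /(pathP x0) hp hk.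
by have /eqP := hp k hk.
Qed.

Lemma repeat_cycle x0 t k : epath s r t -> k < size t ->
  index (nth x0 t k) t < k -> exists c, is_cycle s r (nth x0 t k :: c).
Proof.
move=> ht hk hidx.
set a := nth x0 t k in hidx *; set i := index a t in hidx.
have ai : nth x0 t i = a by rewrite nth_index // mem_nth.
set j := k - i.+1.
have ek : k = (i + j).+1 by rewrite /j; lia.
set w := take j (drop i.+1 t).
have sw : size w = j by rewrite /w size_take size_drop; apply/minn_idPl; lia.
have nw : forall m, m <= j -> nth x0 (a :: w) m = nth x0 t (i + m).
  case=> [|m] hm /=; first by rewrite addn0 ai.
  by rewrite /w nth_take // nth_drop addnS.
apply: (@closed_to_cycle (size w).+1) => //.
  apply/(pathP x0) => m hm.
  have -> : nth x0 w m = nth x0 (a :: w) m.+1 by [].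
  rewrite !nw; try lia.
  by rewrite /erel addnS (epath_nth x0 ht) //; lia.
rewrite (last_nth x0) nw sw // (epath_nth x0 ht) -?ek //; lia.
Qed.


Lemma index_nth_le (x0 : Ed) (t : seq Ed) k : index (nth x0 t k) t <= k.
Proof.
rewrite leqNgt; apply/negP => /(@before_find _ x0 (pred1 (nth x0 t k))).
by rewrite /= eqxx.
Qed.

Lemma paths_inj (x0 : Ed) (t1 t2 : seq Ed) : condition_EXC s r -> epath s r t1 -> epath s r t2 ->
  size t1 = size t2 -> (forall e, index e t1 = index e t2) -> t1 = t2.
Proof.
move=> exc h1 h2 hs hidx.
apply: (eq_from_nth (x0:=x0) hs).
elim/ltn_ind => k IH hk.
have hk2 : k < size t2 by rewrite -hs.
have le1 := index_nth_le x0 t1 k; have le2 := index_nth_le x0 t2 k.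
case: (ltnP (index (nth x0 t1 k) t1) k) => [lt1|ge1]; last first.
  have e1 : index (nth x0 t1 k) t2 = k by rewrite -hidx; apply/eqP; rewrite eqn_leq le1.
  by rewrite -{2}e1 nth_index // -index_mem e1.
case: (ltnP (index (nth x0 t2 k) t2) k) => [lt2|ge2]; last first.
  have e2 : index (nth x0 t2 k) t1 = k by rewrite hidx; apply/eqP; rewrite eqn_leq le2.
  by rewrite -{1}e2 nth_index // -index_mem e2.
have [c1 C1] := repeat_cycle h1 hk lt1.
have [c2 C2] := repeat_cycle h2 hk2 lt2.
apply: (cycle_head_unique exc C1 C2).
case: k IH hk hk2 lt1 lt2 C1 C2 {le1 le2} => [|k] IH hk hk2 lt1 lt2 _ _ //.
rewrite -(epath_nth x0 h1 hk) -(epath_nth x0 h2 hk2) IH //.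
by apply: ltn_trans hk.
Qed.


Lemma num_paths_le n : condition_EXC s r -> (0 < n)%N ->
  (num_paths s r n <= n.+1 ^ #|Ed|)%N.
Proof.
case: n => // n exc _; rewrite /num_paths.
rewrite -(card_ord n.+2) -card_ffun.
apply: (@leq_card_in _ _ (fun t : n.+1.-tuple Ed => [ffun e => (inord (index e t) : 'I_n.+2)])).
move=> t1 t2; rewrite !inE => h1 h2 /ffunP E.
apply: val_inj; apply: (paths_inj (thead t1) exc h1 h2); first by rewrite !size_tuple.
move=> e; have := E e; rewrite !ffunE => /(congr1 val); rewrite /= !inordK //.
  by rewrite ltnS (leq_trans (index_size _ _)) // size_tuple.
by rewrite ltnS (leq_trans (index_size _ _)) // size_tuple.
Qed.

End Comb.

Section An.
Local Open Scope classical_set_scope.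
Local Open Scope ring_scope.
Lemma ln_small (R : realType) (c : R) : 0 < c ->
  exists N : nat, forall n : nat, (N <= n)%N -> ln (n.+1%:R : R) <= c * n%:R.
Proof.
move=> c0.
set M := (Num.Def.truncn (4 / c)).+1.
have hM : 4 / c < M%:R by apply: truncnS_gt.
have M0 : 0 < (M%:R : R) by rewrite ltr0n.
have cM : 4 < c * M%:R by rewrite -ltr_pdivrMl // mulrC.
set L := ln (M%:R : R).
have L0 : 0 <= L by apply: ln_ge0; rewrite ler1n.
exists (Num.Def.truncn (2 * L / c)).+1 => n hn.
have hN : 2 * L / c < n%:R.
  apply: lt_le_trans (truncnS_gt _) _; by rewrite ler_nat.
have x1 : 1 <= (n%:R : R) by rewrite ler1n (leq_trans _ hn).
have h1 : 2 * L < c * n%:R by rewrite -ltr_pdivrMl // mulrC.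
have p1 : 0 < (n.+1%:R : R) / M%:R by rewrite divr_gt0 // ltr0n.
have -> : (n.+1%:R : R) = M%:R * (n.+1%:R / M%:R) by rewrite mulrC divfK // gt_eqF.
rewrite lnM ?posrE //.
have h3 := ln_sublinear p1.
have h4 : (n.+1%:R : R) / M%:R <= c * n%:R / 2.
  rewrite ler_pdivrMr // -natr1. nra.
rewrite -/L. lra.
Qed.

Lemma lnpoly_cvg (R : realType) (m : nat) (P : nat -> nat) :
  (forall n, (0 < n)%N -> (P n <= n.+1 ^ m)%N) ->
  (fun n : nat => ln ((P n)%:R : R) / n%:R) @ \oo --> 0.
Proof.
move=> hP; apply/cvgrPdist_le => e e0.
have c0 : 0 < e / m.+1%:R by rewrite divr_gt0 // ltr0n.
have [N hN] := ln_small c0.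
near=> n.
have n0 : (0 < n)%N by near: n; exists 1%N.
have nN : (N <= n)%N by near: n; exists N.
have x0 : 0 < (n%:R : R) by rewrite ltr0n.
have lnP0 : 0 <= ln ((P n)%:R : R).
  case: (posnP (P n)) => [->|p0]; first by rewrite ln0.
  by apply: ln_ge0; rewrite ler1n.
have lnPle : ln ((P n)%:R : R) <= ln (n.+1%:R : R) *+ m.
  rewrite -lnXn ?ltr0n // -natrX.
  case: (posnP (P n)) => [->|p0]; first by rewrite ln0 // ln_ge0 // ler1n expn_gt0.
  by rewrite ler_ln ?posrE ?ltr0n ?expn_gt0 // ler_nat hP.
have := hN n nN => hln.
rewrite sub0r normrN ger0_norm ?divr_ge0 ?ler0n //.
rewrite ler_pdivrMr //.
apply: (le_trans lnPle).
rewrite -[_ *+ m]mulr_natr.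
have m0 : 0 < (m.+1%:R : R) by rewrite ltr0n.
have hm : (m%:R : R) <= m.+1%:R by rewrite ler_nat.
have lnge : 0 <= ln (n.+1%:R : R) by rewrite ln_ge0 // ler1n.
have : ln (n.+1%:R : R) * m.+1%:R <= e * n%:R.
  by rewrite -ler_pdivlMr // mulrAC.
move=> h; nra.
Unshelve. all: by end_near.
Qed.
End An.

Theorem lemma5p12 (R : realType) (V Ed : finType) (s r : Ed -> V) :
  condition_EXC s r ->
  (forall v : V, ~ is_source r v) ->
  (forall v : V, ~ is_sink s v) ->
  h_alg s r R = 0%E.
Proof.
move=> exc _ _; rewrite /h_alg; destruct (pselect (KE_finite_dim s r)) as [k1|k2]; first by [].
have hu : ((fun n : nat => ((ln (num_paths s r n)%:R / n%:R)%:E : \bar R)) @ \oo --> 0%E)%classic.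
  apply: cvg_EFin; first exact: nearW.
  have H := lnpoly_cvg (R:=R) (fun n => num_paths_le (n:=n) exc).
  have E : fine \o (fun n : nat => ((ln (num_paths s r n)%:R / n%:R)%:E : \bar R)) =
    (fun n : nat => (ln ((num_paths s r n)%:R : R) / n%:R)%R) by [].
  by rewrite E.
by have [_ ->] := cvg_limn_einf_sup hu.
Qed.
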